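(* Let $(S,* )$ be a finite indecomposable cycle set of size $n$, with class $d$ and permutation group $\mathcal G$. Then $n$ divides $|\mathcal G|$. In particular, every prime divisor of $n$ is a prime divisor of $|\mathcal G|$ and of $d$, and if $d$ is a power of a prime $p$ then $n$ is also a power of $p$.
   Context: A cycle set is a set $S$ with a binary operation $*$ such that each $t\mapsto s*t$ is bijective and $(s*t)*(s*u)=(t*s)*(t*u)$ for all $s,t,u$. Write $S=\{s_1,\dots,s_n\}$, let $\psi(s)\in\mathfrak S_n$ satisfy $s_i*s_j=s_{\psi(s_i)(j)}$, and $\mathcal G=\langle\psi(s_1),\dots,\psi(s_n)\rangle\le\mathfrak S_n$, acting on $S$ via $\sigma(s_j)=s_{\sigma(j)}$. $S$ is decomposable if there is a partition $S=X\sqcup Y$ with $X,Y$ nonempty and $\psi(s)(X)\subseteq X$, $\psi(s)(Y)\subseteq Y$ for all $s\in S$; otherwise it is indecomposable. With $T(s)=s*s$ and $\psi_k(s)=\psi(T^{k-1}(s))\circ\cdots\circ\psi(s)$, the class $d$ is the least integer $d\ge1$ with $\psi_d(s)=\mathrm{id}$ for all $s$. *)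

(* Defs.v *)
From mathcomp Require Import all_boot all_fingroup.
Set Implicit Arguments. Unset Strict Implicit. Unset Printing Implicit Defensive.

Record cycle_set (S : finType) := CycleSet {
  cs_op : S -> S -> S;
  cs_bij : forall s : S, bijective (cs_op s);
  cs_eq : forall s t u : S,
    cs_op (cs_op s t) (cs_op s u) = cs_op (cs_op t s) (cs_op t u)
}.

Section CycleSetDefs.
Variables (S : finType) (C : cycle_set S).

Definition psi (s : S) : {perm S} := perm (bij_inj (cs_bij C s)).

Definition Gpsi : {group {perm S}} := <<[set psi s | s : S]>>%G.

Definition Tsq (s : S) : S := cs_op C s s.

(* psi_k(s) = psi(T^{k-1} s) o ... o psi(s); in {perm S}, (p * q) x = q (p x) *)
Fixpoint psik (k : nat) (s : S) : {perm S} :=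
  match k with
  | 0 => 1%g
  | k'.+1 => (psik k' s * psi (iter k' Tsq s))%g
  end.

Definition decomposable : Prop :=
  exists X : {set S}, [/\ X != set0, ~: X != set0,
    (forall s x, x \in X -> psi s x \in X) &
    (forall s x, x \in ~: X -> psi s x \in ~: X)].

Definition indecomposable : Prop := ~ decomposable.

Definition is_class (d : nat) : Prop :=
  [/\ 0 < d, (forall s, psik d s = 1%g) &
      (forall d', 0 < d' -> (forall s, psik d' s = 1%g) -> d <= d')].

End CycleSetDefs.

(* Main.v *)
Require Import Defs.
From mathcomp Require Import all_boot all_fingroup.
Set Implicit Arguments. Unset Strict Implicit. Unset Printing Implicit Defensive.

Section Pf.
Variables (S : finType) (C : cycle_set S).
Local Open Scope group_scope.

Lemma psiE s t : psi C s t = cs_op C s t. Proof. by rewrite permE. Qed.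

Fixpoint lam (mu : {perm S}) (l : seq S) : {perm S} :=
  if l is x :: l' then lam (mu * psi C (mu x)) l' else mu.

Lemma lam_cat mu l m : lam mu (l ++ m) = lam (lam mu l) m.
Proof. by elim: l mu => //= x l IH mu. Qed.

Lemma lam_rcons mu l x : lam mu (rcons l x) = lam mu l * psi C (lam mu l x).
Proof. by rewrite -cats1 lam_cat. Qed.

Lemma lam_swap mu x y l : lam mu [:: x, y & l] = lam mu [:: y, x & l].
Proof.
rewrite /=; congr lam; rewrite !permM -!mulgA; congr (_ * _).
apply/permP => w; rewrite !permM !psiE; exact: cs_eq.
Qed.

Lemma lam_rem mu x m : x \in m -> lam mu m = lam mu (x :: rem x m).
Proof.
elim: m mu => // y m IH mu; rewrite inE /=.
have [->|nyx] := eqVneq y x; first by [].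
rewrite /= => xm.
by rewrite (IH _ xm) -[RHS]/(lam mu [:: x, y & rem x m]) lam_swap.
Qed.

Lemma lam_perm l m mu : perm_eq l m -> lam mu l = lam mu m.
Proof.
elim: l m mu => [|x l IH] m mu pe.
  by have := perm_size pe; case: m pe.
have xm : x \in m by rewrite -(perm_mem pe) mem_head.
rewrite (lam_rem mu xm) /=; apply: IH.
by rewrite -(perm_cons x) (perm_trans pe) // perm_to_rem.
Qed.

Lemma lam_mu_gen mu nu l : lam (mu * nu) l = mu * lam nu (map mu l).
Proof.
elim: l nu => [|x l IH] nu //=.
by rewrite permM -mulgA IH.
Qed.

Lemma lam_mu mu l : lam mu l = mu * lam 1 (map mu l).
Proof. by rewrite -lam_mu_gen mulg1. Qed.

Definition Lam l := lam 1 l.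

Lemma Lam_cat l m : Lam (l ++ m) = Lam l * Lam (map (Lam l) m).
Proof. by rewrite /Lam lam_cat lam_mu. Qed.

Lemma nseqSr (k : nat) (s : S) : nseq k.+1 s = rcons (nseq k s) s.
Proof. by elim: k => //= k ->. Qed.

Lemma Lam_nseq k s : Lam (nseq k s) = psik C k s /\ psik C k s s = iter k (Tsq C) s.
Proof.
elim: k => [|k [IH1 IH2]]; first by rewrite /= perm1.
rewrite nseqSr.
rewrite /Lam lam_rcons -/(Lam _) IH1 /=; split; first by rewrite IH2.
by rewrite permM IH2 psiE.
Qed.

Lemma lam_in mu l : mu \in Gpsi C -> lam mu l \in Gpsi C.
Proof.
elim: l mu => //= x l IH mu mG; apply: IH; rewrite groupM // mem_gen //.
by apply/imsetP; exists (mu x).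
Qed.

Lemma Lam_surj g : g \in Gpsi C -> exists l, Lam l = g.
Proof.
move=> /gen_prodgP [k [c cA ->]].
elim: k c cA => [|k IH] c cA; first by exists [::]; rewrite big_ord0.
rewrite big_ord_recr /=.
have [l Hl] := IH (fun i => c (widen_ord (leqnSn k) i)) (fun i => cA _).
have /imsetP[s _ ->] := cA ord_max.
exists (rcons l ((Lam l)^-1 s)).
by rewrite {1}/Lam lam_rcons -/(Lam l) Hl -Hl permKV.
Qed.

Lemma count_flat_s (g : S -> nat) z s : uniq s ->
  count_mem z (flatten [seq nseq (g y) y | y <- s]) = ((z \in s) * g z)%N.
Proof.
elim: s => //= y s IH /andP[ys us]; rewrite count_cat count_nseq IH // inE.
have [->|nzy] := eqVneq z y; first by rewrite in_cons eqxx (negbTE ys) /= ?addn0.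
by rewrite in_cons (negbTE nzy).
Qed.

Lemma count_flat (g : S -> nat) z :
  count_mem z (flatten [seq nseq (g y) y | y <- enum S]) = g z.
Proof. by rewrite count_flat_s ?enum_uniq // mem_enum mul1n. Qed.

Variables (d : nat) (dpos : 0 < d) (hd : forall s, psik C d s = 1).

Lemma Lam_drop l x : Lam (l ++ nseq d x) = Lam l.
Proof. by rewrite Lam_cat map_nseq (Lam_nseq d _).1 hd mulg1. Qed.

Lemma Lam_dropq l x q : Lam (l ++ nseq (q * d)%N x) = Lam l.
Proof.
elim: q l => [|q IH] l; first by rewrite mul0n cats0.
by rewrite mulSn nseqD catA IH Lam_drop.
Qed.

Lemma Lam_dropF l (g : S -> nat) s :
  Lam (l ++ flatten [seq nseq (g y * d)%N y | y <- s]) = Lam l.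
Proof.
elim: s l => [|y s IH] l /=; first by rewrite cats0.
by rewrite catA IH Lam_dropq.
Qed.

Definition clist (c : {ffun S -> 'I_d}) := flatten [seq nseq (c y) y | y <- enum S].
Definition cnt (l : seq S) : {ffun S -> 'I_d} :=
  [ffun y => Ordinal (ltn_pmod (count_mem y l) dpos)].

Lemma Lam_cnt l : Lam l = Lam (clist (cnt l)).
Proof.
rewrite -[in RHS](Lam_dropF _ (fun y => count_mem y l %/ d) (enum S)) /Lam.
apply: lam_perm; apply/allP => z _ /=.
by rewrite count_cat /clist !count_flat ffunE /= addnC -divn_eq.
Qed.

Definition L (c : {ffun S -> 'I_d}) := Lam (clist c).
Definition F (s : {perm S}) := [set c | L c == s].

Lemma L_in c : L c \in Gpsi C.
Proof. by rewrite /L /Lam; apply: lam_in; exact: group1. Qed.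

Lemma L_surj g : g \in Gpsi C -> exists c, L c = g.
Proof. by move=> /Lam_surj[l <-]; exists (cnt l); rewrite /L -Lam_cnt. Qed.

Lemma fiber_le s t : s \in Gpsi C -> #|F t| <= #|F (s * t)|.
Proof.
move=> sG; have [a La] := L_surj sG.
pose phi (b : {ffun S -> 'I_d}) := cnt (clist a ++ map s^-1 (clist b)).
have phiE b y : (phi b y : nat) = (a y + b (s y)) %% d.
  rewrite ffunE /= count_cat count_flat count_map.
  congr ((_ + _) %% d); rewrite -(count_flat (fun y => b y) (s y)).
  apply: eq_count => z /=; apply/eqP/eqP => [<-|->]; by rewrite ?permKV ?permK.
have inj : injective phi.
  move=> b b' e; apply/ffunP => z; apply/val_inj.
  have := congr1 (fun f : {ffun S -> 'I_d} => nat_of_ord (f (s^-1 z))) e.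
  rewrite /= !phiE permKV => /eqP; rewrite eqn_modDl !modn_small //.
  by move/eqP.
rewrite -(card_imset _ inj); apply: subset_leq_card; apply/subsetP.
move=> _ /imsetP[b + ->]; rewrite !inE => /eqP Lb.
rewrite /L -Lam_cnt Lam_cat -[Lam (clist a)]/(L a) La -map_comp.
rewrite (@eq_map _ _ _ id) ?map_id; first by rewrite -/(L b) Lb.
by move=> y /=; rewrite permKV.
Qed.

Lemma fiber_eq s : s \in Gpsi C -> #|F s| = #|F 1|.
Proof.
move=> sG; apply/eqP; rewrite eqn_leq; apply/andP; split.
  by have := fiber_le s (groupVr sG); rewrite mulVg.
by have := fiber_le 1 sG; rewrite mulg1.
Qed.

Lemma card_G_dvd : #|Gpsi C| %| (d ^ #|S|)%N.
Proof.
have hD : #|{ffun S -> 'I_d}| = (d ^ #|S|)%N by rewrite card_ffun card_ord.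
have -> : (d ^ #|S|)%N = (#|Gpsi C| * #|F 1|)%N.
  rewrite -hD -[LHS]sum1_card.
rewrite (partition_big L (mem (Gpsi C))) /=; last first.
    by move=> c _; exact: L_in.
  rewrite -sum_nat_const; apply: eq_bigr => g gG.
  rewrite -(fiber_eq gG) sum1dep_card; apply: eq_card => c; by rewrite !inE.
exact: dvdn_mulr.
Qed.

End Pf.

Lemma orbit_all (S : finType) (C : cycle_set S) (x0 : S) :
  indecomposable C -> orbit 'P (Gpsi C) x0 = setT.
Proof.
move=> ind; set X := orbit _ _ _.
have stab g y : g \in Gpsi C -> y \in X -> g y \in X.
  move=> gG /orbitP[h hG <-]; apply/orbitP; exists (h * g)%g; first exact: groupM.
  by rewrite /= !apermE permM.
have psiG s : psi C s \in Gpsi C by rewrite mem_gen //; apply/imsetP; exists s.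
case: (eqVneq X setT) => // neq; exfalso; apply: ind; exists X; split.
- by apply/set0Pn; exists x0; exact: orbit_refl.
- by apply: contra neq => /eqP h; rewrite -[X]setCK h setC0.
- by move=> s x xX; apply: stab.
- move=> s x; rewrite !inE; apply: contra => h.
  by rewrite -(permK (psi C s) x); apply: stab; rewrite ?groupV.
Qed.

Theorem mainTheorem7 (S : finType) (C : cycle_set S) (d : nat) :
  0 < #|S| -> indecomposable C -> is_class C d ->
  [/\ #|S| %| #|Gpsi C|,
      (forall p, prime p -> p %| #|S| -> p %| #|Gpsi C| /\ p %| d) &
      (forall p k, prime p -> d = p ^ k -> exists m, #|S| = p ^ m)].
Proof.
move=> Sgt0 ind [dpos hd _].
have nG : #|S| %| #|Gpsi C|.
  have [x0 _] := card_gt0P Sgt0.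
  rewrite -cardsT -(orbit_all x0 ind) card_orbit; exact: dvdn_indexg.
have nd : #|S| %| d ^ #|S| := dvdn_trans nG (card_G_dvd dpos hd).
split => //.
- move=> p pp pn; split; first exact: dvdn_trans pn nG.
  by have := dvdn_trans pn nd; rewrite Euclid_dvdX // => /andP[].
- move=> p k pp dk; rewrite dk -expnM in nd.
  by case/(dvdn_pfactor _ _ pp): nd => m _ ->; exists m.
Qed.
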